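(* Let $(\Sigma,w)$ be a doubly weighted signed graph and $v_0\in V(\Sigma)$, and let $(\Sigma^{v_0},w^{v_0})$ be obtained by switching at $v_0$. Then $X_{(\Sigma,w)}=X_{(\Sigma^{v_0},w^{v_0})}$.
   Context: A signed graph $\Sigma$ is a finite graph (loops and multiple edges allowed) together with $\mathrm{sgn}:E(\Sigma)\to\{+,-\}$; write $e:uv$ if $e$ has endpoints $u,v$. A coloring $\kappa:V(\Sigma)\to\mathbb{Z}$ is proper if $\kappa(u)\ne\mathrm{sgn}(e)\kappa(v)$ for every edge $e:uv$. A double weight is a pair $w=(w_+,w_-)$ of functions $V(\Sigma)\to\mathbb{N}=\{0,1,2,\dots\}$, and $X_{(\Sigma,w)}=\sum_{\kappa\text{ proper}}\prod_{v\in V(\Sigma)}x_{\kappa(v)}^{w_+(v)}x_{-\kappa(v)}^{w_-(v)}$ in commuting variables $x_i$, $i\in\mathbb{Z}$. Switching at $v_0$: $w^{v_0}$ agrees with $w$ except that if $w(v_0)=(a,b)$ then $w^{v_0}(v_0)=(b,a)$; $\Sigma^{v_0}$ is $\Sigma$ with the sign of every non-loop edge incident to $v_0$ reversed (all other edges, including loops, unchanged). *)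

(* Defs.v *)
From HB Require Import structures.
From mathcomp Require Import all_boot all_order all_algebra.
From mathcomp Require Import boolp classical_sets cardinality.
Set Implicit Arguments. Unset Strict Implicit. Unset Printing Implicit Defensive.
Import Order.TTheory GRing.Theory Num.Theory.
Local Open Scope ring_scope.

(* A signed graph: finite vertex type V, finite edge type E (multiple edges
   allowed), an endpoint map (loops = edges with equal endpoints), and a sign
   (true = +, false = -). *)
Record signed_graph (V : finType) := SignedGraph {
  sg_edge : finType;
  sg_ends : sg_edge -> V * V;
  sg_sgn  : sg_edge -> bool }.
Arguments sg_edge {V} s.
Arguments sg_ends {V} s _.
Arguments sg_sgn {V} s _.

Record dweight (V : finType) := DWeight { w_plus : V -> nat; w_minus : V -> nat }.
Arguments w_plus {V} d _.
Arguments w_minus {V} d _.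

Definition sgn_act (b : bool) (z : int) : int := if b then z else - z.

Definition proper (V : finType) (S : signed_graph V) (kappa : V -> int) : Prop :=
  forall e : sg_edge S,
    kappa (sg_ends S e).1 != sgn_act (sg_sgn S e) (kappa (sg_ends S e).2).

(* The monomial prod_v x_{kappa v}^{w_+ v} x_{-kappa v}^{w_- v}, represented by
   its exponent vector i |-> exponent of x_i (variables commute). *)
Definition monomial (V : finType) (w : dweight V) (kappa : V -> int) : int -> nat :=
  fun i => (\sum_(v : V) (w_plus w v * (kappa v == i)
                          + w_minus w v * (- kappa v == i)))%N.

(* The proper colorings contributing the monomial m to X_(S,w); the coefficient
   of m in X_(S,w) is the (possibly infinite) cardinality of this set. *)
Definition X_terms (V : finType) (S : signed_graph V) (w : dweight V)
    (m : int -> nat) : set (V -> int) :=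
  [set kappa | proper S kappa /\ monomial w kappa = m].

Definition X_eq (V : finType) (S1 S2 : signed_graph V) (w1 w2 : dweight V) : Prop :=
  forall m : int -> nat, card_eq (X_terms S1 w1 m) (X_terms S2 w2 m).

Definition switch_weight (V : finType) (w : dweight V) (v0 : V) : dweight V :=
  DWeight (fun v => if v == v0 then w_minus w v else w_plus w v)
          (fun v => if v == v0 then w_plus w v else w_minus w v).

Definition switch_graph (V : finType) (S : signed_graph V) (v0 : V) : signed_graph V :=
  @SignedGraph V (sg_edge S) (sg_ends S)
    (fun e => let u := (sg_ends S e).1 in let v := (sg_ends S e).2 in
       if (u != v) && ((u == v0) || (v == v0)) then ~~ sg_sgn S e else sg_sgn S e).

(* Main.v *)
Require Import Defs.
From mathcomp Require Import all_boot all_order all_algebra.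
From mathcomp Require Import boolp classical_sets cardinality.
Import Order.TTheory GRing.Theory Num.Theory.
Set Implicit Arguments. Unset Strict Implicit.
Local Open Scope ring_scope.

Definition flip {V : finType} (v0 : V) (k : V -> int) : V -> int :=
  fun v => if v == v0 then - k v else k v.

Lemma flipK (V : finType) (v0 : V) k : flip v0 (flip v0 k) = k.
Proof. apply: funext => v; rewrite /flip; case: (v == v0) => //; exact: opprK. Qed.

Lemma flip_proper (V : finType) (S : signed_graph V) (v0 : V) k :
  Defs.proper S k -> Defs.proper (switch_graph S v0) (flip v0 k).
Proof.
move=> P e; have := P e; rewrite /= /flip /sgn_act.
case: (sg_ends S e) => u v /=.
case: (eqVneq u v) => [->|nuv] /=.
  case: (v == v0); case: (sg_sgn S e) => //; rewrite ?eqr_opp //.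
case: (eqVneq u v0) nuv => [->|nu] nuv /=.
  rewrite eq_sym in nuv; rewrite (negbTE nuv) /=.
  by case: (sg_sgn S e) => /=; rewrite ?eqr_oppLR ?opprK.
case: (eqVneq v v0) => [->|nv] /=.
  by case: (sg_sgn S e) => /=; rewrite ?opprK.
done.
Qed.

Lemma flip_mono (V : finType) (w : dweight V) (v0 : V) k :
  monomial (switch_weight w v0) (flip v0 k) = monomial w k.
Proof.
apply: funext => i; rewrite /monomial; apply: eq_bigr => v _ /=.
rewrite /flip; case: (v == v0) => //; rewrite opprK addnC //.
Qed.


Lemma flip_proper' (V : finType) (S : signed_graph V) (v0 : V) k :
  Defs.proper (switch_graph S v0) (flip v0 k) -> Defs.proper S k.
Proof.
move=> P e; have := P e; rewrite /= /flip /sgn_act.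
case: (sg_ends S e) => u v /=.
case: (eqVneq u v) => [->|nuv] /=.
  case: (v == v0); case: (sg_sgn S e) => //; rewrite ?eqr_opp //.
case: (eqVneq u v0) nuv => [->|nu] nuv /=.
  rewrite eq_sym in nuv; rewrite (negbTE nuv) /=.
  by case: (sg_sgn S e) => /=; rewrite ?eqr_oppLR ?opprK.
case: (eqVneq v v0) => [->|nv] /=.
  by case: (sg_sgn S e) => /=; rewrite ?opprK.
done.
Qed.

Lemma flip_mono' (V : finType) (w : dweight V) (v0 : V) k :
  monomial w (flip v0 k) = monomial (switch_weight w v0) k.
Proof. by rewrite -{2}(flipK v0 k) flip_mono. Qed.

Local Open Scope classical_set_scope.
Theorem lemma4p2 (V : finType) (S : signed_graph V) (w : dweight V) (v0 : V) :
  X_eq S (switch_graph S v0) w (switch_weight w v0).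
Proof.
move=> m.
have -> : X_terms (switch_graph S v0) (switch_weight w v0) m = flip v0 @` X_terms S w m.
  apply/seteqP; split.
  - move=> k [Pk Mk]; exists (flip v0 k); last exact: flipK.
    split; [apply: (@flip_proper' V S v0); rewrite flipK // | by rewrite flip_mono'].
  - by move=> _ [k [Pk Mk] <-]; split; [exact: flip_proper | rewrite flip_mono].
rewrite card_eq_sym; apply: inj_card_eq.
by move=> a b _ _ E; rewrite -(flipK v0 a) E flipK.
Qed.
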